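(* Let $(\mathcal{A}_\Lambda,\partial_\Lambda)$ be a filtered Chekanov–Eliashberg DGA over $\mathbb{Z}_2$ generated by $q_1,\dots,q_n$, let $k$ be a positive integer, and let $(S_k\mathcal{A}_\Lambda,\partial_\Lambda)$ be its grading-$k$ stabilization, with additional generators $e_k,e_{k-1}$. Let $\delta>0$. If the height filtration of $\mathcal{A}_\Lambda$ is extended to $S_k\mathcal{A}_\Lambda$ in such a way that $0<h(e_k)-h(e_{k-1})<2\delta$, then the persistent linearized contact homologies of $(\mathcal{A}_\Lambda,\partial_\Lambda)$ and $(S_k\mathcal{A}_\Lambda,\partial_\Lambda)$ (with respect to an augmentation $\epsilon$ of $\mathcal{A}_\Lambda$ and its extension to $S_k\mathcal{A}_\Lambda$ by $\epsilon(e_k)=\epsilon(e_{k-1})=0$) are $2\delta$-interleaved.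
   Context: A filtered Chekanov–Eliashberg DGA: a Chekanov–Eliashberg DGA (free noncommutative graded algebra over $\mathbb{Z}_2$ on generators, with differential) together with heights $h(q_i)>0$, extended by $h(\text{word})=$ sum of letter heights and $h(\text{sum})=$ max, such that the differential strictly decreases height. The grading-$k$ stabilization $S_k\mathcal{A}_\Lambda$ is generated by $e_k,e_{k-1},q_1,\dots,q_n$ with $|e_k|=k$, $|e_{k-1}|=k-1$, other gradings unchanged, and differential $\partial(e_k)=e_{k-1}$, $\partial(e_{k-1})=0$, agreeing with $\partial_\Lambda$ on the $q_i$. The persistent linearized contact homology is $t\mapsto H_\ast(A^t,\partial_1^\epsilon)$, where $\partial_1^\epsilon$ is the linearized differential with respect to the augmentation $\epsilon$ on the vector space spanned by the generators and $A^t$ is spanned by generators of height $\le t$, with transfer maps induced by inclusion. Persistence modules $U^\bullet,V^\bullet$ are $2\delta$-interleaved if there are maps $\varphi^t:U^t\to V^{t+\delta}$, $\psi^t:V^t\to U^{t+\delta}$ commuting with transfer maps with $\psi^{t+\delta}\varphi^t$ and $\varphi^{t+\delta}\psi^t$ equal to the transfer maps from $t$ to $t+2\delta$. *)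

(* Defs.v *)
From Stdlib Require Import Reals.
From mathcomp Require Import all_boot all_order all_algebra.
Set Implicit Arguments.
Unset Strict Implicit.
Unset Printing Implicit Defensive.
Import GRing.Theory.
Local Open Scope ring_scope.

(* Free noncommutative algebra over Z_2 on a finite set G of generators.     *)
(* A word is a [seq G]; an algebra element is represented by a [seq (seq G)] *)
(* read as a formal sum of words over Z_2: the coefficient of a word [w] is  *)
(* the parity of its number of occurrences.                                  *)

Definition coef (G : eqType) (p : seq (seq G)) (w : seq G) : bool :=
  odd (count_mem w p).

Record dga (G : finType) := DGA {
  deg : G -> int;
  dif : G -> seq (seq G)
}.

Section DGADefs.
Variables (G : finType) (A : dga G).

Definition deg_word (w : seq G) : int := \sum_(x <- w) deg A x.

(* Leibniz rule over Z_2 (no signs):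
   d(x1...xm) = sum_j x1..x_{j-1} (d x_j) x_{j+1}..xm *)
Fixpoint dif_word (w : seq G) : seq (seq G) :=
  match w with
  | [::] => [::]
  | x :: w' => [seq u ++ w' | u <- dif A x] ++ [seq x :: u | u <- dif_word w']
  end.

Definition dif_poly (p : seq (seq G)) : seq (seq G) := flatten (map dif_word p).

Definition is_dga : Prop :=
  (forall q w, coef (dif A q) w -> deg_word w = deg A q - 1) /\
  (forall q w, ~~ coef (dif_poly (dif A q)) w).

(* Augmentation eps : A -> Z_2 (graded DGA map, d-closed): eps(q) = 1 only for
   degree-0 generators, eps is multiplicative, eps o d = 0. *)
Definition eps_word (eps : G -> bool) (w : seq G) : bool := all eps w.

Definition is_augmentation (eps : G -> bool) : Prop :=
  (forall q, eps q -> deg A q = 0) /\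
  (forall q, ~~ odd (count (eps_word eps) (dif A q))).

(* Heights: h(q) > 0, h(word) = sum of letter heights, h(sum) = max over
   words with nonzero coefficient; the differential strictly decreases h. *)
Definition height_word (h : G -> R) (w : seq G) : R :=
  foldr Rplus R0 (map h w).

Definition is_filtered (h : G -> R) : Prop :=
  (forall q, Rlt R0 (h q)) /\
  (forall q w, coef (dif A q) w -> Rlt (height_word h w) (h q)).

Definition filtered_CE_dga (h : G -> R) : Prop := is_dga /\ is_filtered h.

(* Linearized differential with respect to eps: conjugate by the DGA
   automorphism phi_eps(q) = q + eps(q) and keep the word-length-one part. *)
Fixpoint phi_word (eps : G -> bool) (w : seq G) : seq (seq G) :=
  match w with
  | [::] => [:: [::]]
  | x :: w' => [seq x :: u | u <- phi_word eps w'] ++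
               (if eps x then phi_word eps w' else [::])
  end.

Definition lin_dif_gen (eps : G -> bool) (q : G) : {ffun G -> 'F_2} :=
  [ffun g => (count_mem [:: g] (flatten (map (phi_word eps) (dif A q))))%:R].

Definition lin_dif (eps : G -> bool) (v : {ffun G -> 'F_2}) : {ffun G -> 'F_2} :=
  [ffun g => \sum_(q : G) v q * lin_dif_gen eps q g].

End DGADefs.

(* Filtered chain complexes (V = span of generators, d) and the persistence *)
(* module t |-> H_*(A^t, d), A^t = span of generators of height <= t.       *)
Section Persistence.
Variables (G : finType) (h : G -> R) (d : {ffun G -> 'F_2} -> {ffun G -> 'F_2}).

Definition in_filt (t : R) (v : {ffun G -> 'F_2}) : Prop :=
  forall g, v g != 0 -> Rle (h g) t.

Definition cycle_at (t : R) (v : {ffun G -> 'F_2}) : Prop :=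
  in_filt t v /\ d v = 0.

Definition boundary_at (t : R) (v : {ffun G -> 'F_2}) : Prop :=
  exists u, in_filt t u /\ d u = v.

End Persistence.

(* A family of maps phi^t : H(U^t) -> H(V^{t+delta}) of the persistence
   modules of homologies, represented (as maps out of quotients always are)
   by functions on chains: phi t sends cycles of U^t to cycles of V^{t+delta},
   is additive modulo boundaries, sends boundaries to boundaries (so it
   induces a well-defined Z_2-linear map on homology), and commutes with the
   transfer maps (induced by inclusions) on homology. *)
Definition pmod_shift_map (G1 G2 : finType)
  (h1 : G1 -> R) (d1 : {ffun G1 -> 'F_2} -> {ffun G1 -> 'F_2})
  (h2 : G2 -> R) (d2 : {ffun G2 -> 'F_2} -> {ffun G2 -> 'F_2})
  (delta : R) (phi : R -> {ffun G1 -> 'F_2} -> {ffun G2 -> 'F_2}) : Prop :=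
  (forall t z, cycle_at h1 d1 t z -> cycle_at h2 d2 (Rplus t delta) (phi t z)) /\
  (forall t z1 z2, cycle_at h1 d1 t z1 -> cycle_at h1 d1 t z2 ->
     boundary_at h2 d2 (Rplus t delta) (phi t (z1 + z2) - (phi t z1 + phi t z2))) /\
  (forall t b, boundary_at h1 d1 t b -> boundary_at h2 d2 (Rplus t delta) (phi t b)) /\
  (forall s t z, Rle s t -> cycle_at h1 d1 s z ->
     boundary_at h2 d2 (Rplus t delta) (phi t z - phi s z)).

Definition interleaved2 (G1 G2 : finType)
  (h1 : G1 -> R) (d1 : {ffun G1 -> 'F_2} -> {ffun G1 -> 'F_2})
  (h2 : G2 -> R) (d2 : {ffun G2 -> 'F_2} -> {ffun G2 -> 'F_2})
  (delta : R) : Prop :=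
  exists (phi : R -> {ffun G1 -> 'F_2} -> {ffun G2 -> 'F_2})
         (psi : R -> {ffun G2 -> 'F_2} -> {ffun G1 -> 'F_2}),
    pmod_shift_map h1 d1 h2 d2 delta phi /\
    pmod_shift_map h2 d2 h1 d1 delta psi /\
    (forall t z, cycle_at h1 d1 t z ->
       boundary_at h1 d1 (Rplus t (Rplus delta delta)) (psi (Rplus t delta) (phi t z) - z)) /\
    (forall t z, cycle_at h2 d2 t z ->
       boundary_at h2 d2 (Rplus t (Rplus delta delta)) (phi (Rplus t delta) (psi t z) - z)).

(* Grading-k stabilization: generators G + bool, with inr true = e_k and    *)
(* inr false = e_{k-1}.                                                     *)
Definition stab (G : finType) (A : dga G) (k : int) : dga (G + bool)%type :=
  DGA (fun x => match x with
                | inl g => deg A g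
                | inr true => k
                | inr false => k - 1
                end)
      (fun x => match x with
                | inl g => map (map inl) (dif A g)
                | inr true => [:: [:: inr false]]
                | inr false => [::]
                end).

Definition stab_height (G : finType) (h : G -> R) (hek hek1 : R) : G + bool -> R :=
  fun x => match x with inl g => h g | inr true => hek | inr false => hek1 end.

Definition stab_eps (G : finType) (eps : G -> bool) : G + bool -> bool :=
  fun x => match x with inl g => eps g | inr _ => false end.

(* Main.v *)
Require Import Defs.
From Stdlib Require Import Reals Lra.
From mathcomp Require Import all_boot all_order all_algebra.
Set Implicit Arguments.
Unset Strict Implicit.
Unset Printing Implicit Defensive.
Import GRing.Theory.

Section Aux.
Local Open Scope ring_scope.

Lemma F2_opp (a : 'F_2) : - a = a.
Proof. by case: a => [[|[|//]] ?]; apply/val_inj. Qed.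

Variables (n : nat) (A : dga 'I_n) (eps : 'I_n -> bool) (k : int).
Notation SA := (stab A k).
Notation seps := (stab_eps eps).

Lemma phi_word_inl (w : seq 'I_n) :
  phi_word seps (map inl w) = map (map inl) (phi_word eps w).
Proof.
elim: w => [|x w IH] //=.
rewrite IH map_cat -!map_comp; congr (_ ++ _).
by case: (eps x).
Qed.

Lemma flat_inl (D : seq (seq 'I_n)) :
  flatten (map (phi_word seps) (map (map inl) D)) =
  map (map inl) (flatten (map (phi_word eps) D)).
Proof.
elim: D => [|w D IH] //=.
by rewrite phi_word_inl IH map_cat.
Qed.

Lemma count_inl (S : seq (seq 'I_n)) g :
  count_mem [:: (inl g : 'I_n + bool)] (map (map inl) S) = count_mem [:: g] S.
Proof.
rewrite count_map; apply: eq_count => u /=.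
by case: u => [|a [|b u]] //=.
Qed.

Lemma count_inr (S : seq (seq 'I_n)) b :
  count_mem [:: (inr b : 'I_n + bool)] (map (map inl) S) = 0%N.
Proof.
rewrite count_map; apply/eqP; rewrite -leqn0 leqNgt -has_count; apply/hasPn => u _ /=.
by case: u => [|a [|c u]].
Qed.

Lemma LG_inl_inl q g : lin_dif_gen SA seps (inl q) (inl g) = lin_dif_gen A eps q g.
Proof. rewrite !ffunE /=. have E := flat_inl (dif A q). rewrite E. by rewrite count_inl. Qed.

Lemma LG_inl_inr q b : lin_dif_gen SA seps (inl q) (inr b) = 0.
Proof. by rewrite !ffunE /= flat_inl count_inr. Qed.

Lemma LG_true x : lin_dif_gen SA seps (inr true) x = (x == inr false)%:R.
Proof. rewrite !ffunE /= addn0 eqseq_cons andbT eq_sym. by []. Qed.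

Lemma LG_false x : lin_dif_gen SA seps (inr false) x = 0.
Proof. by rewrite !ffunE. Qed.

Lemma LD_inl v g : lin_dif SA seps v (inl g) = \sum_q v (inl q) * lin_dif_gen A eps q g.
Proof.
rewrite ffunE big_sumType /= big_bool /= LG_true LG_false /= !mulr0 !addr0.
by apply: eq_bigr => q _; rewrite LG_inl_inl.
Qed.

Lemma LD_inr v b : lin_dif SA seps v (inr b) = if b then 0 else v (inr true).
Proof.
rewrite ffunE big_sumType /= big_bool /= LG_true LG_false /= mulr0 addr0.
rewrite big1 ?add0r; last by move=> q _; rewrite LG_inl_inr mulr0.
by case: b => /=; rewrite ?mulr0 ?mulr1.
Qed.

Lemma lin_dif0 (G : finType) (B : dga G) e : lin_dif B e 0 = 0.
Proof. by apply/ffunP => g; rewrite !ffunE big1 // => q _; rewrite ffunE mul0r. Qed.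

End Aux.
Definition ek n (a : 'F_2) : {ffun ('I_n + bool)%type -> 'F_2} :=
  [ffun x => if x == inr true then a else 0%R].
Definition incl n (z : {ffun 'I_n -> 'F_2}) : {ffun ('I_n + bool)%type -> 'F_2} :=
  [ffun x => match x return 'F_2 with inl g => z g | inr _ => 0%R end].
Definition proj n (w : {ffun ('I_n + bool)%type -> 'F_2}) : {ffun 'I_n -> 'F_2} :=
  [ffun g => w (inl g)].
Local Open Scope ring_scope.

Theorem proposition4p5 (n : nat) (A : dga 'I_n) (h : 'I_n -> R)
  (eps : 'I_n -> bool) (k : nat) (delta hek hek1 : R) :
  filtered_CE_dga A h ->
  is_augmentation A eps ->
  (0 < k)%N ->
  Rlt R0 delta ->
  Rlt R0 hek1 ->
  Rlt R0 (Rminus hek hek1) ->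
  Rlt (Rminus hek hek1) (Rplus delta delta) ->
  interleaved2 h (lin_dif A eps)
               (stab_height h hek hek1) (lin_dif (stab A (Posz k)) (stab_eps eps))
               delta.
Proof.
move=> _ _ _ Hd _ H1 H2.
pose SA := stab A (Posz k). pose seps := stab_eps eps.
pose sh := stab_height h hek hek1.
pose phi := fun (t : R) (z : {ffun 'I_n -> 'F_2}) => incl z.
pose psi := fun (t : R) (w : {ffun ('I_n + bool)%type -> 'F_2}) => proj w.
have phiD z : lin_dif SA seps (phi R0 z) = phi R0 (lin_dif A eps z).
  apply/ffunP => [[g|b]]; rewrite [RHS]ffunE ?LD_inl ?LD_inr.
    by rewrite ffunE; apply: eq_bigr => q _; rewrite ffunE.
  by case: b; rewrite ?ffunE.
have psiD w : lin_dif A eps (psi R0 w) = psi R0 (lin_dif SA seps w).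
  apply/ffunP => g; rewrite [RHS]ffunE LD_inl ffunE.
  by apply: eq_bigr => q _; rewrite ffunE.
have b0 (G : finType) (hh : G -> R) (B : dga G) e t :
    boundary_at hh (lin_dif B e) t 0.
  by exists 0; split; [move=> g; rewrite ffunE eqxx | exact: lin_dif0].
have filt_mono (G : finType) (hh : G -> R) s t v :
    Rle s t -> in_filt hh s v -> in_filt hh t v.
  by move=> Hst Hv g /Hv; lra.
have Hdt t : Rle t (Rplus t delta) by lra.
exists phi, psi; split; [|split; [|split]].
- split; [|split; [|split]].
  + move=> t z [Hz Hdz]; split.
      by move=> [g|b]; rewrite ffunE // => /Hz /=; lra.
    by rewrite (phiD z) Hdz; apply/ffunP => -[g|b]; rewrite !ffunE.
  + move=> t z1 z2 _ _.
    suff -> : phi t (z1 + z2) - (phi t z1 + phi t z2) = 0 by apply: b0.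
    by apply/ffunP => -[g|b]; rewrite !ffunE /= ?addr0 subrr.
  + move=> t _ [u [Hu <-]]; exists (phi t u); split; last exact: phiD.
    by move=> [g|b]; rewrite ffunE // => /Hu /=; lra.
  + move=> s t z _ _; rewrite subrr; apply: b0.
- split; [|split; [|split]].
  + move=> t w [Hw Hdw]; split.
      by move=> g; rewrite ffunE => /Hw /=; lra.
    by rewrite (psiD w) Hdw; apply/ffunP => g; rewrite !ffunE.
  + move=> t z1 z2 _ _.
    suff -> : psi t (z1 + z2) - (psi t z1 + psi t z2) = 0 by apply: b0.
    by apply/ffunP => g; rewrite !ffunE subrr.
  + move=> t _ [u [Hu <-]]; exists (psi t u); split; last exact: psiD.
    by move=> g; rewrite ffunE => /Hu /=; lra.
  + move=> s t z _ _; rewrite subrr; apply: b0.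
- move=> t z _.
  suff -> : psi (Rplus t delta) (phi t z) - z = 0 by apply: b0.
  by apply/ffunP => g; rewrite !ffunE subrr.
- move=> t w [Hw Hdw].
  have wt : w (inr true) = 0.
    by move/ffunP: (Hdw) => /(_ (inr false)); rewrite LD_inr ffunE.
  exists (ek n (w (inr false))); split.
    move=> x; rewrite ffunE; case: (x =P inr true) => [-> Ha|_]; last by rewrite eqxx.
    have := Hw _ Ha; simpl; lra.
  apply/ffunP => -[g|[|]]; rewrite ?LD_inl ?LD_inr !ffunE.
  + rewrite big1 ?subrr // => q _; by rewrite ffunE mul0r.
  + by rewrite wt subrr.
  + by rewrite /= sub0r F2_opp.
Qed.
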